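(* Let $\mathbb F_q$ be a finite field of characteristic $2$, and let $(C_i\subsetneq\mathbb F_q^n)_{i\in[t]}$ be a collection of proper classical codes with product-expansion at least $\rho>0$. Then there exists $\rho'=\rho'(\rho,t)>0$ depending only on $\rho$ and $t$ such that for every subcode $C_t'\subseteq C_t$, the collection $(C_1,\dots,C_{t-1},C_t')$ has product-expansion at least $\rho'$.
   Context: Product-expansion: For codes $C_1\subseteq\mathbb F_q^{n_1},\dots,C_t\subseteq\mathbb F_q^{n_t}$, identify $\mathbb F_q^{n_1}\otimes\cdots\otimes\mathbb F_q^{n_t}$ with $t$-dimensional arrays; a direction-$i$ column is the vector in $\mathbb F_q^{n_i}$ obtained by fixing all coordinates except the $i$-th. $C^{(i)}$ is the space of arrays all of whose direction-$i$ columns lie in $C_i$, and $C_1\boxplus\cdots\boxplus C_t=C^{(1)}+\cdots+C^{(t)}$. $|c|$ is the number of nonzero entries of an array, $|c|_i$ its number of nonzero direction-$i$ columns. The product-expansion of $(C_i)_{i\in[t]}$ is the largest $\rho\ge0$ such that every $c\in C_1\boxplus\cdots\boxplus C_t$ has a decomposition $c=c_1+\cdots+c_t$ with $c_i\in C^{(i)}$ and $|c|\ge\rho\sum_in_i|c_i|_i$. *)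

(* Defs.v *)
(* Codes are subspaces of F^n represented as row spaces of
   n x n matrices (mxalgebra); t-dimensional arrays over [n]^t are finite
   functions on {ffun 'I_t -> 'I_n}. *)
From mathcomp Require Import all_boot all_order all_algebra.
From mathcomp Require Import all_reals.
Set Implicit Arguments. Unset Strict Implicit. Unset Printing Implicit Defensive.
Import Order.TTheory GRing.Theory Num.Theory.
Local Open Scope ring_scope.

Section ProductExpansion.
Variables (F : fieldType) (t n : nat).

Definition point := {ffun 'I_t -> 'I_n}.
Definition array := {ffun point -> F}.

Definition upd (x : point) (i : 'I_t) (k : 'I_n) : point :=
  [ffun j => if j == i then k else x j].

Definition dcol (c : array) (i : 'I_t) (x : point) : 'rV[F]_n :=
  \row_(k < n) c (upd x i k).

Definition colkey (i : 'I_t) (x : point) : {ffun 'I_t -> option 'I_n} :=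
  [ffun j => if j == i then None else Some (x j)].

Definition wt (c : array) : nat := #|[set x : point | c x != 0]|.

Definition wtdir (c : array) (i : 'I_t) : nat :=
  #|[set colkey i x | x in [set x : point | dcol c i x != 0]]|.

Definition in_dircode (C : 'M[F]_n) (i : 'I_t) (c : array) : Prop :=
  forall x : point, (dcol c i x <= C)%MS.

Definition in_boxplus (C : 'I_t -> 'M[F]_n) (c : array) : Prop :=
  exists d : 'I_t -> array,
    (forall i, in_dircode (C i) i (d i)) /\ c = \sum_(i < t) d i.

(* the collection (C_i) has product-expansion at least rho
   (all lengths n_i equal n here) *)
Definition pexp_atleast (R : realType) (C : 'I_t -> 'M[F]_n) (rho : R) : Prop :=
  forall c : array, in_boxplus C c ->
    exists d : 'I_t -> array,
      [/\ forall i, in_dircode (C i) i (d i),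
          c = \sum_(i < t) d i &
          rho * (\sum_(i < t) (n * wtdir (d i) i)%:R) <= (wt c)%:R].

End ProductExpansion.

(* Main.v *)
Require Import Defs.
From mathcomp Require Import all_boot all_order all_algebra all_field.
From mathcomp Require Import all_reals.
From mathcomp Require Import lra.
Set Implicit Arguments. Unset Strict Implicit. Unset Printing Implicit Defensive.
Import Order.TTheory GRing.Theory Num.Theory.
Local Open Scope ring_scope.

Lemma upd_same {t n : nat} (x : point t n) i k : upd x i k i = k.
Proof. by rewrite ffunE eqxx. Qed.

Lemma upd_other {t n : nat} (x : point t n) i j k : j != i -> upd x i k j = x j.
Proof. by move=> h; rewrite ffunE (negPf h). Qed.

Lemma upd_upd {t n : nat} (x : point t n) i k l : upd (upd x i k) i l = upd x i l.
Proof. by apply/ffunP=> j; rewrite !ffunE; case: (j == i). Qed.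

Lemma upd_id {t n : nat} (x : point t n) i : upd x i (x i) = x.
Proof. by apply/ffunP=> j; rewrite !ffunE; case: eqP => // ->. Qed.

Lemma upd_comm {t n : nat} (x : point t n) i j k l : i != j ->
  upd (upd x i k) j l = upd (upd x j l) i k.
Proof.
move=> ij; apply/ffunP=> m; rewrite !ffunE.
case: (eqVneq m j) => [mj|mj]; case: (eqVneq m i) => [mi|mi] //.
by move: ij; rewrite -mi -mj eqxx.
Qed.

Definition dmap {F : fieldType} {t n : nat} (i : 'I_t) (A : 'M[F]_n)
  (c : array F t n) : array F t n :=
  [ffun x => \sum_(k < n) c (upd x i k) * A k (x i)].

Lemma dcol_upd {F : fieldType} {t n : nat} (c : array F t n) i x k :
  dcol c i (upd x i k) = dcol c i x.
Proof. by apply/rowP=> m; rewrite !mxE upd_upd. Qed.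

Lemma dcolE {F : fieldType} {t n : nat} (c : array F t n) i x :
  dcol c i x 0 (x i) = c x.
Proof. by rewrite mxE upd_id. Qed.

Lemma dmapE {F : fieldType} {t n : nat} (c : array F t n) i A x :
  dmap i A c x = (dcol c i x *m A) 0 (x i).
Proof. by rewrite ffunE mxE; apply: eq_bigr => k _; rewrite mxE. Qed.

Lemma dcol_dmap {F : fieldType} {t n : nat} (c : array F t n) i A x :
  dcol (dmap i A c) i x = dcol c i x *m A.
Proof.
by apply/rowP=> m; rewrite mxE dmapE dcol_upd upd_same.
Qed.

Lemma dcol_dmap_other {F : fieldType} {t n : nat} (c : array F t n) i j A x :
  j != i ->
  dcol (dmap i A c) j x = \sum_(k < n) A k (x i) *: dcol c j (upd x i k).
Proof.
move=> ji; apply/rowP=> m; rewrite !mxE ffunE summxE.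
apply: eq_bigr => k _; rewrite !mxE mulrC upd_other 1?eq_sym //.
by rewrite upd_comm.
Qed.

Lemma dcolD {F : fieldType} {t n : nat} (c1 c2 : array F t n) i x :
  dcol (c1 + c2) i x = dcol c1 i x + dcol c2 i x.
Proof. by apply/rowP=> m; rewrite !mxE ffunE. Qed.

Lemma dcolN {F : fieldType} {t n : nat} (c : array F t n) i x :
  dcol (- c) i x = - dcol c i x.
Proof. by apply/rowP=> m; rewrite !mxE ffunE. Qed.

Lemma dcol0 {F : fieldType} {t n : nat} i (x : point t n) :
  dcol (0 : array F t n) i x = 0.
Proof. by apply/rowP=> m; rewrite !mxE ffunE. Qed.

Lemma dcol_sum {F : fieldType} {t n : nat} (I : finType) (c : I -> array F t n) i x :
  dcol (\sum_(k : I) c k) i x = \sum_(k : I) dcol (c k) i x.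
Proof. by apply/rowP=> m; rewrite !mxE summxE sum_ffunE; apply: eq_bigr=> k _; rewrite mxE. Qed.

Lemma array_eq0 {F : fieldType} {t n : nat} (c : array F t n) i :
  (forall x, dcol c i x = 0) -> c = 0.
Proof. by move=> h; apply/ffunP=> x; rewrite -(dcolE c i) h ffunE mxE. Qed.

Lemma dmapD {F : fieldType} {t n : nat} (c1 c2 : array F t n) i A :
  dmap i A (c1 + c2) = dmap i A c1 + dmap i A c2.
Proof. by apply/ffunP=> x; rewrite dmapE [in RHS]ffunE !dmapE dcolD mulmxDl mxE. Qed.

Lemma dmapN {F : fieldType} {t n : nat} (c : array F t n) i A :
  dmap i A (- c) = - dmap i A c.
Proof. by apply/ffunP=> x; rewrite dmapE [in RHS]ffunE !dmapE dcolN mulNmx mxE. Qed.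

Lemma dmap0 {F : fieldType} {t n : nat} i A :
  dmap i A (0 : array F t n) = 0.
Proof. by apply/ffunP=> x; rewrite dmapE [in RHS]ffunE dcol0 mul0mx mxE. Qed.

Lemma dmapB {F : fieldType} {t n : nat} (c1 c2 : array F t n) i A :
  dmap i A (c1 - c2) = dmap i A c1 - dmap i A c2.
Proof. by rewrite dmapD dmapN. Qed.

Lemma dmap_sum {F : fieldType} {t n : nat} (I : finType) (P : pred I)
   (c : I -> array F t n) i A :
  dmap i A (\sum_(k | P k) c k) = \sum_(k | P k) dmap i A (c k).
Proof. by apply: (big_morph _ (fun a b => dmapD a b i A) (dmap0 i A)). Qed.

Lemma dmap_comp {F : fieldType} {t n : nat} (c : array F t n) i A B :
  dmap i B (dmap i A c) = dmap i (A *m B) c.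
Proof. by apply/ffunP=> x; rewrite !dmapE dcol_dmap mulmxA. Qed.

Lemma dmap1 {F : fieldType} {t n : nat} (c : array F t n) i :
  dmap i 1%:M c = c.
Proof. by apply/ffunP=> x; rewrite !dmapE mulmx1 dcolE. Qed.

Lemma dmap_summx {F : fieldType} {t n : nat} (c : array F t n) i (A : 'I_n -> 'M[F]_n) :
  dmap i (\sum_k A k) c = \sum_k dmap i (A k) c.
Proof.
apply/ffunP=> x; rewrite sum_ffunE dmapE mulmx_sumr summxE.
by apply: eq_bigr => k _; rewrite dmapE.
Qed.

Lemma ic_add {F : fieldType} {t n : nat} (C : 'M[F]_n) i (c1 c2 : array F t n) :
  in_dircode C i c1 -> in_dircode C i c2 -> in_dircode C i (c1 + c2).
Proof. by move=> h1 h2 x; rewrite dcolD addmx_sub. Qed.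

Lemma ic_opp {F : fieldType} {t n : nat} (C : 'M[F]_n) i (c : array F t n) :
  in_dircode C i c -> in_dircode C i (- c).
Proof. by move=> h x; rewrite dcolN eqmx_opp. Qed.

Lemma ic0 {F : fieldType} {t n : nat} (C : 'M[F]_n) i :
  in_dircode C i (0 : array F t n).
Proof. by move=> x; rewrite dcol0 sub0mx. Qed.

Lemma ic_sub {F : fieldType} {t n : nat} (C : 'M[F]_n) i (c1 c2 : array F t n) :
  in_dircode C i c1 -> in_dircode C i c2 -> in_dircode C i (c1 - c2).
Proof. by move=> h1 h2; apply: ic_add => //; apply: ic_opp. Qed.

Lemma ic_sum {F : fieldType} {t n : nat} (C : 'M[F]_n) i (I : finType) (P : pred I)
   (c : I -> array F t n) :
  (forall k, P k -> in_dircode C i (c k)) -> in_dircode C i (\sum_(k | P k) c k).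
Proof.
move=> h; apply: (big_ind (in_dircode C i)) => //; first exact: ic0.
exact: ic_add.
Qed.

Lemma ic_mono {F : fieldType} {t n : nat} (C D : 'M[F]_n) i (c : array F t n) :
  (C <= D)%MS -> in_dircode C i c -> in_dircode D i c.
Proof. by move=> CD h x; apply: submx_trans (h x) CD. Qed.

Lemma ic_dmap_other {F : fieldType} {t n : nat} (C : 'M[F]_n) i j A (c : array F t n) :
  j != i -> in_dircode C j c -> in_dircode C j (dmap i A c).
Proof.
move=> ji h x; rewrite dcol_dmap_other //.
by apply: summx_sub => k _; apply: scalemx_sub.
Qed.

Lemma ic_dmap_same {F : fieldType} {t n : nat} (C D : 'M[F]_n) i A (c : array F t n) :
  (C *m A <= D)%MS -> in_dircode C i c -> in_dircode D i (dmap i A c).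
Proof.
by move=> CA h x; rewrite dcol_dmap; apply: submx_trans CA; apply: submxMr.
Qed.

Lemma dmap_kill {F : fieldType} {t n : nat} (C : 'M[F]_n) i A (c : array F t n) :
  C *m A = 0 -> in_dircode C i c -> dmap i A c = 0.
Proof.
move=> CA h; apply: (@array_eq0 _ _ _ _ i) => x; rewrite dcol_dmap.
apply/eqP; rewrite -submx0 -CA; exact: submxMr.
Qed.

Lemma card_part {t n : nat} (P : pred (point t n)) i :
  #|[set x : point t n | P x]| = (\sum_(z < n) #|[set x : point t n | (x i == z) && P x]|)%N.
Proof.
rewrite -sum1_card (partition_big (fun x : point t n => x i) predT) //=.
apply: eq_bigr => z _; rewrite -sum1_card; apply: eq_bigl => x.
by rewrite !inE andbC.
Qed.

Lemma wtdir_alt {F : fieldType} {t n : nat} (c : array F t n) i (z : 'I_n) :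
  wtdir c i = #|[set x : point t n | (x i == z) && (dcol c i x != 0)]|.
Proof.
rewrite /wtdir -(@card_in_imset _ _ (colkey i)); last first.
  move=> x y; rewrite !inE => /andP[/eqP xz _] /andP[/eqP yz _] e.
  apply/ffunP=> j; case: (eqVneq j i) => [->|ji]; first by rewrite xz yz.
  by move/ffunP: e => /(_ j); rewrite !ffunE (negPf ji) => -[].
apply: eq_card => k; apply/imsetP/imsetP => -[x]; rewrite !inE.
- move=> hx ->; exists (upd x i z); first by rewrite inE upd_same eqxx dcol_upd.
  by apply/ffunP=> j; rewrite !ffunE; case: (j == i).
- by move=> /andP[_ hx] ->; exists x; rewrite // inE.
Qed.

Lemma wt_le_wtdir {F : fieldType} {t n : nat} (c : array F t n) i :
  (wt c <= n * wtdir c i)%N.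
Proof.
rewrite /wt (card_part _ i) -[n in (n * _)%N]card_ord -sum_nat_const.
apply: leq_sum => z _; rewrite (wtdir_alt c i z); apply: subset_leq_card.
apply/subsetP => x; rewrite !inE => /andP[-> cx] /=.
by apply: contra cx => /eqP h; rewrite -(dcolE c i) h mxE.
Qed.

Lemma wtdirD {F : fieldType} {t n : nat} (c1 c2 : array F t n) i :
  (wtdir (c1 + c2)%R i <= wtdir c1 i + wtdir c2 i)%N.
Proof.
rewrite /wtdir; apply: leq_trans (leq_card_setU _ _).
apply: subset_leq_card; apply/subsetP => k /imsetP[x]; rewrite inE dcolD => hx ->.
rewrite inE; case: (eqVneq (dcol c1 i x) 0) => h1.
  by rewrite h1 add0r in hx; apply/orP; right; apply/imsetP; exists x; rewrite ?inE.
by apply/orP; left; apply/imsetP; exists x; rewrite ?inE.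
Qed.

Lemma wtdir_le {F : fieldType} {t n : nat} (c1 c2 : array F t n) i :
  (forall x, dcol c1 i x != 0 -> dcol c2 i x != 0) -> (wtdir c1 i <= wtdir c2 i)%N.
Proof.
move=> h; apply: subset_leq_card; apply/subsetP => k /imsetP[x]; rewrite inE => hx ->.
by apply/imsetP; exists x; rewrite ?inE ?h.
Qed.

Lemma wtdirN {F : fieldType} {t n : nat} (c : array F t n) i :
  (wtdir (- c)%R i <= wtdir c i)%N.
Proof. by apply: wtdir_le => x; rewrite dcolN oppr_eq0. Qed.

Lemma wtdir0 {F : fieldType} {t n : nat} i :
  wtdir (0 : array F t n) i = 0%N.
Proof.
apply/eqP; rewrite /wtdir cards_eq0; apply/eqP/setP => k; rewrite inE.
by apply/imsetP => -[x]; rewrite inE dcol0 eqxx.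
Qed.

Lemma wtdir_sum {F : fieldType} {t n : nat} (I : finType) (P : pred I)
   (c : I -> array F t n) i :
  (wtdir (\sum_(k | P k) c k)%R i <= \sum_(k | P k) wtdir (c k) i)%N.
Proof.
apply: (big_ind2 (fun a b => wtdir a i <= b)%N); first by rewrite wtdir0.
  by move=> a1 b1 a2 b2 h1 h2; apply: leq_trans (wtdirD _ _ _) (leq_add h1 h2).
by [].
Qed.

Lemma wtdir_dmap_same {F : fieldType} {t n : nat} (c : array F t n) i A :
  (wtdir (dmap i A c) i <= wtdir c i)%N.
Proof.
apply: wtdir_le => x; rewrite dcol_dmap; apply: contra => /eqP ->.
by rewrite mul0mx.
Qed.

Lemma wtdir_dmap_col {F : fieldType} {t n : nat} (c : array F t n) (i j : 'I_t) (A : 'M[F]_n) (k0 : 'I_n) :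
  (forall l m, m != k0 -> A l m = 0) -> j != i ->
  (wtdir (dmap i A c) j <= wtdir c j)%N.
Proof.
move=> hA ji; rewrite (wtdir_alt _ j k0) (wtdir_alt c j k0).
set S := [set x : point t n | _ & dcol c j x != 0].
apply: (leq_trans _ (leq_imset_card (fun y => upd y i k0) S)).
apply: subset_leq_card; apply/subsetP => x; rewrite inE => /andP[/eqP xj].
rewrite dcol_dmap_other // => hx.
have xi : x i = k0.
  apply/eqP; apply: contraNT hx => xi.
  by apply/eqP; apply: big1 => k _; rewrite hA // scale0r.
case: (pickP (fun k => dcol c j (upd x i k) != 0)) => [k hk | h0]; last first.
  move: hx; rewrite big1 ?eqxx // => k _.
  by move: (h0 k) => /= /negbFE /eqP ->; rewrite scaler0.
apply/imsetP; exists (upd x i k).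
  by rewrite inE upd_other // xj eqxx hk.
by rewrite upd_upd -xi upd_id.
Qed.

Lemma wt_dmap_entry {F : fieldType} {t n : nat} (c : array F t n) (i : 'I_t) (A : 'M[F]_n) (k j0 : 'I_n) (a : F) :
  (forall l m, A l m = if (l == k) && (m == j0) then a else 0) ->
  (wt (dmap i A c) <= #|[set x : point t n | (x i == k) && (c x != 0%R)]|)%N.
Proof.
move=> hA; set S := [set x : point t n | _ & _].
apply: (leq_trans _ (leq_imset_card (fun y => upd y i j0) S)).
apply: subset_leq_card; apply/subsetP => p; rewrite inE ffunE.
rewrite (bigD1 k) //= big1 => [|l lk]; last by rewrite hA (negPf lk) /=; apply: mulr0.
rewrite addr0 hA eqxx /=; case: (eqVneq (p i) j0) => [pj | pj]; last by rewrite mulr0 eqxx.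
move=> hp; apply/imsetP; exists (upd p i k).
  rewrite inE upd_same eqxx /=; apply: contraNneq hp => ->; by rewrite mul0r.
by rewrite upd_upd -pj upd_id.
Qed.

Lemma SE {F : fieldType} {T n : nat} {R : realType} (C : 'I_T -> 'M[F]_n) (rho : R) (r : 'I_T) :
  0 < rho -> (\rank (C r) < n)%N -> pexp_atleast C rho ->
  forall g : 'I_T -> array F T n, (forall i, in_dircode (C i) i (g i)) -> g r = 0 ->
  exists h : 'I_T -> array F T n,
    [/\ forall i, in_dircode (C i) i (h i), h r = 0,
        \sum_i g i = \sum_i h i &
        rho * (\sum_(i < T) (n * wtdir (h i) i)%:R) <= (wt (\sum_i g i))%:R].
Proof.
move=> rho0 rk pe g gC gr.
set G := \sum_i g i.
have [K hKC Kn0] : exists2 K : 'M[F]_n, C r *m K = 0 & K != 0.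
  exists (cokermx (C r)); first exact: mulmx_coker.
  apply/eqP => K0; move: (mxrank_coker (C r)); rewrite K0 mxrank0 => /eqP.
  by rewrite eq_sym subn_eq0 leqNgt rk.
case/matrix0Pn: Kn0 => j0 [l0 hK].
pose a := K j0 l0.
pose M (k : 'I_n) : 'M[F]_n := \matrix_(l, m) (if (l == k) && (m == j0) then 1 else 0).
pose N (k : 'I_n) : 'M[F]_n := \matrix_(l, m) (if m == k then K l l0 / a else 0).
have CN k : C r *m N k = 0.
  apply/matrixP => p m; rewrite !mxE.
  case: (eqVneq m k) => mk.
    transitivity (\sum_s C r p s * K s l0 / a).
      by apply: eq_bigr => s _; rewrite mxE mk eqxx mulrA.
    rewrite -mulr_suml.
    have : (C r *m K) p l0 = 0 by rewrite hKC mxE.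
    by rewrite mxE => ->; rewrite mul0r.
  by apply: big1 => s _; rewrite mxE (negPf mk) mulr0.
have MN : \sum_k M k *m N k = 1%:M.
  apply/matrixP => l m; rewrite summxE mxE.
  rewrite (bigD1 l) //= big1 => [|k kl]; last first.
    rewrite mxE; apply: big1 => s _; rewrite !mxE.
    by rewrite [l == k]eq_sym (negPf kl) /= mul0r.
  rewrite addr0 mxE (bigD1 j0) //= big1 => [|s sj]; last by rewrite !mxE (negPf sj) andbF mul0r.
  rewrite addr0 !mxE !eqxx /= mul1r eq_sym.
  by case: (l == m); rewrite ?mulfV.
have ex k : exists e : 'I_T -> array F T n,
   [/\ forall i, in_dircode (C i) i (e i), dmap r (M k) G = \sum_i e i &
       rho * (\sum_(i < T) (n * wtdir (e i) i)%:R) <= (wt (dmap r (M k) G))%:R].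
  apply: pe; exists (fun i => dmap r (M k) (g i)); split; last by rewrite /G dmap_sum.
  move=> i; case: (eqVneq i r) => [->|ir]; first by rewrite gr dmap0; apply: ic0.
  exact: ic_dmap_other.
have [e he] := fin_all_exists ex.
have hr : \sum_k dmap r (N k) (e k r) = 0.
  by apply: big1 => k _; apply: (dmap_kill (CN k)); case: (he k).
exists (fun i => \sum_k dmap r (N k) (e k i)); split => //.
- move=> i; case: (eqVneq i r) => [->|ir]; first by rewrite hr; apply: ic0.
  by apply: ic_sum => k _; apply: ic_dmap_other => //; case: (he k).
- rewrite exchange_big /= -(dmap1 G r) -MN dmap_summx; apply: eq_bigr => k _.
  by case: (he k) => _ hk _; rewrite -dmap_sum -hk dmap_comp.
have hw i : (wtdir (\sum_k dmap r (N k) (e k i))%R i <= \sum_k wtdir (e k i) i)%N.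
  apply: leq_trans; first exact: wtdir_sum.
  apply: leq_sum => k _; case: (eqVneq i r) => [->|ir].
    by rewrite (dmap_kill (CN k)) ?wtdir0 //; case: (he k).
  by apply: (@wtdir_dmap_col _ _ _ (e k i) r i (N k) k) => // l m mk; rewrite mxE (negPf mk).
have hwk k : rho * (\sum_i (n * wtdir (e k i) i)%:R) <=
             (#|[set x : point T n | (x r == k) && (G x != 0)]|)%:R.
  case: (he k) => _ _ h; apply: le_trans h _; rewrite ler_nat.
  by apply: (@wt_dmap_entry _ _ _ G r (M k) k j0 1) => l m; rewrite mxE.
apply: le_trans (_ : rho * (\sum_i \sum_k (n * wtdir (e k i) i)%:R) <= _).
  apply: ler_wpM2l; first exact: ltW.
  apply: ler_sum => i _; rewrite -natr_sum ler_nat -big_distrr /= leq_mul2l.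
  by rewrite hw orbT.
rewrite exchange_big /= mulr_sumr.
apply: le_trans (ler_sum _ (fun k _ => hwk k)) _.
by rewrite -natr_sum /wt (card_part _ r).
Qed.

Lemma arith (R : realType) (rho Se Sh D W : R) : 0 < rho -> 0 <= Se -> 0 <= Sh ->
  D <= Se + Sh + Se -> rho * Se <= W -> rho * Sh <= Se ->
  rho ^+ 2 / (2 * rho + 1) * D <= W.
Proof.
move=> r0 e0 h0 hD he hh.
have p : 0 < 2 * rho + 1 by nra.
rewrite mulrAC ler_pdivrMr //.
have h1 : rho ^+ 2 * D <= rho ^+ 2 * (Se + Sh + Se) by apply: ler_wpM2l => //; nra.
have h2 : rho * (rho * Sh) <= rho * Se by apply: ler_wpM2l => //; nra.
have h3 : 2 * rho * (rho * Se) <= 2 * rho * W by apply: ler_wpM2l => //; nra.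
nra.
Qed.

Theorem lemmaA2 (R : realType) (t : nat) (rho : R) :
  0 < rho ->
  exists rho' : R, 0 < rho' /\
    forall (F : finFieldType) (n : nat) (C : 'I_t.+1 -> 'M[F]_n),
      (2 \in [pchar F])%N ->
      (forall i, \rank (C i) < n)%N ->
      pexp_atleast C rho ->
      forall C' : 'M[F]_n, (C' <= C ord_max)%MS ->
        pexp_atleast (fun i => if i == ord_max then C' else C i) rho'.
Proof.
move=> rho0; exists (rho ^+ 2 / (2 * rho + 1)); split.
  by apply: divr_gt0; [exact: exprn_gt0 | nra].
move=> F n C _ rk pe C' C'C c [dA [hdA cdef]].
set r : 'I_t.+1 := ord_max.
have hdAr : in_dircode C' r (dA r) by move: (hdA r); rewrite eqxx.
have inC : in_boxplus C c.
  exists dA; split => // i; move: (hdA i); case: ifP => [/eqP -> | _ //].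
  exact: ic_mono.
have [e [he ce hwe]] := pe c inC.
pose Q : 'M[F]_n := 1%:M - proj_mx C' (C'^C)%MS.
have C'Q : C' *m Q = 0.
  by rewrite mulmxBr mulmx1 proj_mx_id ?subrr ?capmx_compl.
pose f := dmap r Q (e r).
pose g i := if i == r then 0 else dmap r Q (dA i - e i).
have hdAi i : i != r -> in_dircode (C i) i (dA i).
  by move=> ir; move: (hdA i); rewrite (negPf ir).
have gC i : in_dircode (C i) i (g i).
  rewrite /g; case: (eqVneq i r) => [_|ir]; first exact: ic0.
  by apply: ic_dmap_other => //; apply: ic_sub => //; apply: hdAi.
have gr : g r = 0 by rewrite /g eqxx.
have fg : \sum_i g i = f.
  have h0 : \sum_i dmap r Q (dA i - e i) = 0.
    by rewrite -dmap_sum sumrB -cdef -ce subrr dmap0.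
  rewrite (bigD1 r) //= dmapB (dmap_kill C'Q hdAr) sub0r in h0.
  rewrite (bigD1 r) //= /g eqxx add0r.
  under eq_bigr => i ir do rewrite (negPf ir).
  by move/eqP: h0; rewrite addrC subr_eq0 => /eqP.
have [h [hC hr hsum hw]] := SE rho0 (rk r) pe gC gr.
rewrite fg in hw.
pose d i := e i + h i - (if i == r then f else 0).
exists d; split.
- move=> i /=; rewrite /d; case: (eqVneq i r) => [-> | ir].
    move=> x; rewrite hr addr0 dcolD dcolN /f dcol_dmap /Q mulmxBr mulmx1 opprB.
    by rewrite addrC subrK proj_mx_sub.
  by rewrite subr0; apply: ic_add => //; rewrite (negPf ir).
- rewrite /d sumrB big_split /= -ce -hsum fg.
  rewrite (bigD1 r) //= eqxx big1 ?addr0 ?addrK // => i /negPf -> //.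
set Se : R := \sum_(i < t.+1) (n * wtdir (e i) i)%:R.
set Sh : R := \sum_(i < t.+1) (n * wtdir (h i) i)%:R.
have Se0 : 0 <= Se by apply: sumr_ge0 => i _; apply: ler0n.
have Sh0 : 0 <= Sh by apply: sumr_ge0 => i _; apply: ler0n.
have fr : (n * wtdir f r)%:R <= Se.
  rewrite /Se (bigD1 r) //= -[X in X <= _]addr0 lerD //; last first.
    by apply: sumr_ge0 => i _; apply: ler0n.
  by rewrite ler_nat leq_mul2l wtdir_dmap_same orbT.
apply: (@arith R rho Se Sh) => //.
- apply: le_trans (_ : _ <= \sum_i ((n * wtdir (e i) i)%:R + (n * wtdir (h i) i)%:R
      + (if i == r then (n * wtdir f r)%:R else 0))) _.
    apply: ler_sum => i _; rewrite /d.
    have hwd : (wtdir (e i + h i - (if i == r then f else 0))%R i <=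
        wtdir (e i) i + wtdir (h i) i + (if i == r then wtdir f r else 0))%N.
      apply: leq_trans (wtdirD _ _ _) _; apply: leq_add; first exact: wtdirD.
      by case: (eqVneq i r) => [->|_]; [exact: wtdirN | rewrite oppr0 wtdir0].
    apply: le_trans (_ : _ <= (n * (wtdir (e i) i + wtdir (h i) i +
        (if i == r then wtdir f r else 0)))%:R) _.
      by rewrite ler_nat leq_mul2l hwd orbT.
    by rewrite !mulnDr !natrD; case: (i == r); rewrite ?muln0 ?addr0.
  have hf : \sum_i (if i == r then (n * wtdir f r)%:R else 0 : R) = (n * wtdir f r)%:R.
    by rewrite (bigD1 r) //= ?eqxx big1 ?addr0 // => i /negPf ->.
  by rewrite !big_split /= hf lerD2l.
- apply: le_trans hw _; apply: (le_trans _ fr); rewrite ler_nat; exact: wt_le_wtdir.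
Qed.
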